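(* Let $H\in\mathrm{C}(\mathbb{R}\times\mathbb{R})$ satisfy $\lim_{p\to\pm\infty}H(p,x)=\infty$ uniformly in $x\in\mathbb{R}$, let $x\mapsto H(p,x)$ be $1$-periodic for every $p$, and assume $H\in\mathrm{Lip}([-B,B]\times\mathbb{R})$ for every $B>0$. Then for each $\theta\in\mathbb{R}$ there exist a unique $\overline{H}(\theta)\in\mathbb{R}$ and a $1$-periodic $F_\theta\in\mathrm{C}^2(\mathbb{R})$ such that $$F_\theta''(x)+H(\theta+F_\theta'(x),x)=\overline{H}(\theta)\quad\text{for all }x\in\mathbb{R},$$ and moreover $p_-(\theta)\le\theta+F_\theta'(x)\le p_+(\theta)$ for all $x\in\mathbb{R}$.
   Context: For $\theta\in\mathbb{R}$, $U(\theta)=\max\{H(\theta,x):\,x\in[0,1]\}$, $p_-(\theta)=\min_{x\in[0,1]}\min\{p\in\mathbb{R}:\,H(p,x)\le U(\theta)\}$ and $p_+(\theta)=\max_{x\in[0,1]}\max\{p\in\mathbb{R}:\,H(p,x)\le U(\theta)\}$. Uniqueness of $\overline{H}(\theta)$ means: it is the only real number for which such a $1$-periodic $\mathrm{C}^2$ function exists. *)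

(* Defs.v *)
From Stdlib Require Import Reals.
From Coquelicot Require Import Coquelicot.
Open Scope R_scope.

(* U(theta) = max_{x in [0,1]} H(theta,x)  (a max: sup attained for continuous H) *)
Definition Ubar (H : R -> R -> R) (theta : R) : R :=
  real (Lub_Rbar (fun y => exists x, 0 <= x <= 1 /\ y = H theta x)).

Definition pminus (H : R -> R -> R) (theta : R) : R :=
  real (Glb_Rbar (fun p => exists x, 0 <= x <= 1 /\ H p x <= Ubar H theta)).

Definition pplus (H : R -> R -> R) (theta : R) : R :=
  real (Lub_Rbar (fun p => exists x, 0 <= x <= 1 /\ H p x <= Ubar H theta)).

Definition C2 (F : R -> R) : Prop :=
  (forall x, ex_derive F x) /\
  (forall x, ex_derive (Derive F) x) /\
  (forall x, continuous (Derive (Derive F)) x).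

Definition periodic1 (F : R -> R) : Prop := forall x, F (x + 1) = F x.

Definition cell_solution (H : R -> R -> R) (theta c : R) (F : R -> R) : Prop :=
  periodic1 F /\ C2 F /\
  forall x, Derive (Derive F) x + H (theta + Derive F x) x = c.

(* Main.v *)
Require Import Defs.
From Stdlib Require Import Reals Lra Lia Psatz Classical.
From Coquelicot Require Import Coquelicot.
Open Scope R_scope.

Lemma cont_eps (f : R -> R) (x : R) : continuous f x <->
  forall eps : posreal, locally x (fun u => Rabs (f u - f x) < eps).
Proof.
  rewrite <- continuity_pt_locally. split; intro H.
  - apply continuity_pt_filterlim. exact H.
  - apply continuity_pt_filterlim in H. exact H.
Qed.

Lemma locally_R (x : R) (P : R -> Prop) :
  (exists d, 0 < d /\ forall y, Rabs (y - x) < d -> P y) -> locally x P.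
Proof.
  intros [d [Hd HP]]. exists (mkposreal d Hd). intros y Hy. apply HP. exact Hy.
Qed.

Lemma locally_R' (x : R) (P : R -> Prop) :
  locally x P -> exists d, 0 < d /\ forall y, Rabs (y - x) < d -> P y.
Proof.
  intros [d HP]. exists d. split. apply cond_pos. intros y Hy. apply HP. exact Hy.
Qed.

Lemma der_cont (f : R -> R) t l : is_derive f t l -> continuity_pt f t.
Proof.
  intro H. apply continuity_pt_filterlim.
  apply (ex_derive_continuous (K := R_AbsRing) (V := R_NormedModule) f t). exists l. exact H.
Qed.

Lemma deriv_sign (w : R -> R) s d : is_derive w s d -> 0 < d -> w s = 0 ->
  exists del, 0 < del /\ (forall t, s - del < t < s -> w t < 0) /\
                        (forall t, s < t < s + del -> 0 < w t).
Proof.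
  intros Hd Hpos H0. apply is_derive_Reals in Hd.
  destruct (Hd (d/2)) as [del Hdel]. lra.
  exists del. split. apply cond_pos. split.
  - intros t Ht. specialize (Hdel (t - s)).
    replace (s + (t - s)) with t in Hdel by ring. rewrite H0 in Hdel.
    assert (h1 : t - s <> 0) by lra.
    assert (h2 : Rabs (t - s) < del) by (rewrite Rabs_left; lra).
    specialize (Hdel h1 h2).
    apply Rabs_def2 in Hdel. destruct Hdel as [Ha Hb].
    assert (d / 2 < (w t - 0) / (t - s)) by lra.
    assert (Hn : t - s < 0) by lra.
    assert (0 < (w t - 0) / (t - s)) by lra.
    unfold Rdiv in H1. 
    destruct (Rlt_or_le (w t) 0) as [|Hc]; auto.
    exfalso. assert (/ (t - s) < 0) by (apply Rinv_lt_0_compat; lra).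
    nra.
  - intros t Ht. specialize (Hdel (t - s)).
    replace (s + (t - s)) with t in Hdel by ring. rewrite H0 in Hdel.
    assert (h1 : t - s <> 0) by lra.
    assert (h2 : Rabs (t - s) < del) by (rewrite Rabs_right; lra).
    specialize (Hdel h1 h2).
    apply Rabs_def2 in Hdel. destruct Hdel as [Ha Hb].
    assert (0 < (w t - 0) / (t - s)) by lra.
    unfold Rdiv in H.
    assert (0 < / (t - s)) by (apply Rinv_0_lt_compat; lra).
    destruct (Rlt_or_le 0 (w t)) as [|Hc]; auto.
    exfalso. nra.
Qed.

Lemma cross_pos (w dw : R -> R) :
  (forall t, is_derive w t (dw t)) -> (forall t, w t = 0 -> 0 < dw t) ->
  forall a b, a < b -> 0 < w a -> w b <= 0 -> False.
Proof.
  intros Hd Hz a b Hab Ha Hb.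
  assert (Hc : forall t, continuity_pt w t).
  { intro t. apply (der_cont w t (dw t)). apply Hd. }
  set (E := fun t => a <= t <= b /\ forall r, a <= r <= t -> 0 < w r).
  destruct (completeness E) as [s [Hub Hlub]].
  { exists b. intros t [Ht _]. lra. }
  { exists a. split. lra. intros r Hr. replace r with a by lra. exact Ha. }
  assert (Eas : a <= s). { apply Hub. split. lra. intros r Hr. replace r with a by lra. exact Ha. }
  assert (Esb : s <= b). { apply Hlub. intros t [Ht _]. lra. }
  assert (P1 : forall r, a <= r < s -> 0 < w r).
  { intros r Hr. destruct (Rlt_or_le r s) as [_|]; [|lra].
    apply NNPP. intro Hn.
    assert (is_upper_bound E r).
    { intros t [Ht Hall]. destruct (Rle_or_lt t r); auto. exfalso. apply Hn. apply Hall. lra. }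
    apply Hlub in H. lra. }
  destruct (Rtotal_order (w s) 0) as [Hneg|[Hzero|Hpos]].
  - assert (Hsa : a < s). { destruct (Req_dec a s); [subst; lra|lra]. }
    destruct (proj1 (continuity_pt_locally w s) (Hc s) (mkposreal (- w s) ltac:(lra))) as [del Hdel].
    set (r := Rmax a (s - del/2)).
    assert (Hr1 : a <= r < s). { unfold r. pose proof (cond_pos del). unfold Rmax; destruct Rle_dec; lra. }
    assert (Hr2 : Rabs (r - s) < del).
    { unfold r. pose proof (cond_pos del). unfold Rmax; destruct Rle_dec; apply Rabs_def1; lra. }
    specialize (Hdel r Hr2). simpl in Hdel. apply Rabs_def2 in Hdel. specialize (P1 r Hr1). lra.
  - destruct (deriv_sign w s (dw s) (Hd s) (Hz s Hzero) Hzero) as [del [Hdel [HL _]]].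
    assert (Hsa : a < s). { destruct (Req_dec a s); [subst; lra|lra]. }
    set (r := Rmax a (s - del/2)).
    assert (Hr1 : a <= r < s). { unfold r. unfold Rmax; destruct Rle_dec; lra. }
    assert (Hr2 : s - del < r < s). { unfold r. unfold Rmax; destruct Rle_dec; lra. }
    specialize (HL r Hr2). specialize (P1 r Hr1). lra.
  - assert (Hsb : s < b). { destruct (Req_dec s b); [subst; lra|lra]. }
    destruct (proj1 (continuity_pt_locally w s) (Hc s) (mkposreal (w s) Hpos)) as [del Hdel].
    set (t := Rmin b (s + del/2)).
    assert (Et : E t).
    { split. unfold t; pose proof (cond_pos del); unfold Rmin; destruct Rle_dec; lra.
      intros r Hr. destruct (Rlt_or_le r s). apply P1; lra.
      assert (Hr2 : Rabs (r - s) < del).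
      { pose proof (cond_pos del). assert (r <= s + del/2) by (unfold t in Hr; unfold Rmin in Hr; destruct Rle_dec; lra).
        apply Rabs_def1; lra. }
      specialize (Hdel r Hr2). simpl in Hdel. apply Rabs_def2 in Hdel. lra. }
    apply Hub in Et. unfold t in Et. pose proof (cond_pos del). unfold Rmin in Et; destruct Rle_dec; lra.
Qed.

Lemma cross (w dw : R -> R) :
  (forall t, is_derive w t (dw t)) -> (forall t, w t = 0 -> 0 < dw t) ->
  forall a b, a < b -> 0 <= w a -> 0 < w b.
Proof.
  intros Hd Hz a b Hab Ha.
  destruct (Rlt_or_le 0 (w b)) as [|Hb]; auto. exfalso.
  destruct Ha as [Ha|Ha].
  - exact (cross_pos w dw Hd Hz a b Hab Ha Hb).
  - destruct (deriv_sign w a (dw a) (Hd a) (Hz a (eq_sym Ha)) (eq_sym Ha)) as [del [Hdel [_ HR]]].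
    destruct (Rlt_or_le b (a + del)).
    + specialize (HR b ltac:(lra)). lra.
    + apply (cross_pos w dw Hd Hz (a + del/2) b). lra. apply HR. lra. exact Hb.
Qed.

Lemma exRI (g : R -> R) a b : (forall s, continuous g s) -> ex_RInt g a b.
Proof. intro H. apply (ex_RInt_continuous (V := R_CompleteNormedModule)). intros; apply H. Qed.

Lemma int_bound_pos (g h : R -> R) (a t Ih : R) : a <= t ->
  (forall s, continuous g s) -> is_RInt h a t Ih ->
  (forall s, a <= s <= t -> Rabs (g s) <= h s) -> Rabs (RInt g a t) <= Ih.
Proof.
  intros Ht Hc Hh Hb.
  assert (Hex : ex_RInt g a t) by (apply exRI; exact Hc).
  pose proof (RInt_correct g a t Hex) as Hg.
  apply Rabs_le. split.
  - assert (Hh' : is_RInt (fun s => - h s) a t (- Ih)).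
    { apply (is_RInt_opp h a t Ih Hh). }
    assert (- Ih <= RInt g a t); [|lra].
    apply (is_RInt_le (fun s => - h s) g a t); auto.
    intros x Hx. specialize (Hb x ltac:(lra)). apply Rabs_le_between in Hb. lra.
  - apply (is_RInt_le g h a t); auto.
    intros x Hx. specialize (Hb x ltac:(lra)). apply Rabs_le_between in Hb. lra.
Qed.

Lemma int_exp_bound (g : R -> R) (K b t : R) : 0 < b ->
  (forall s, continuous g s) -> (forall s, Rabs (g s) <= K * exp (b * Rabs s)) ->
  Rabs (RInt g 0 t) <= K * (exp (b * Rabs t) - 1) / b.
Proof.
  intros Hb Hc Hg.
  destruct (Rle_or_lt 0 t) as [Ht|Ht].
  - apply (int_bound_pos g (fun s => K * exp (b * s))); auto.
    + assert (E : K * (exp (b * Rabs t) - 1) / b = minus ((fun s => K * exp (b * s) / b) t) ((fun s => K * exp (b * s) / b) 0)).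
      { rewrite Rabs_right by lra. unfold minus, plus, opp; simpl. rewrite Rmult_0_r, exp_0. field. lra. }
      rewrite E. apply (is_RInt_derive (V := R_CompleteNormedModule) (fun s => K * exp (b * s) / b)).
      * intros x _. auto_derive; auto. field. lra.
      * intros x _. apply continuity_pt_filterlim. apply continuity_pt_mult. apply continuity_pt_const. intros u v; auto.
        apply (continuity_pt_comp (fun s => b * s) exp). apply continuity_pt_mult. apply continuity_pt_const. intros u v; auto. apply derivable_continuous_pt. apply derivable_pt_id. apply derivable_continuous_pt. apply derivable_pt_exp.
    + intros s Hs. replace (b * s) with (b * Rabs s). apply Hg. rewrite Rabs_right by lra. ring.
  - rewrite <- opp_RInt_swap by (apply exRI; exact Hc).
    unfold opp; simpl. rewrite Rabs_Ropp.
    apply (int_bound_pos g (fun s => K * exp (- b * s))); auto. lra.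
    + assert (E : K * (exp (b * Rabs t) - 1) / b = minus ((fun s => - K * exp (- b * s) / b) 0) ((fun s => - K * exp (- b * s) / b) t)).
      { rewrite Rabs_left by lra. unfold minus, plus, opp; simpl. rewrite Rmult_0_r, exp_0. replace (b * - t) with (-b * t) by ring. field. lra. }
      rewrite E. apply (is_RInt_derive (V := R_CompleteNormedModule) (fun s => - K * exp (- b * s) / b)).
      * intros x _. auto_derive; auto. field. lra.
      * intros x _. apply continuity_pt_filterlim. apply continuity_pt_mult. apply continuity_pt_const. intros u v; auto.
        apply (continuity_pt_comp (fun s => - b * s) exp). apply continuity_pt_mult. apply continuity_pt_const. intros u v; auto. apply derivable_continuous_pt. apply derivable_pt_id. apply derivable_continuous_pt. apply derivable_pt_exp.
    + intros s Hs. replace (- b * s) with (b * Rabs s). apply Hg. rewrite Rabs_left1 by lra. ring.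
Qed.

Lemma lip_of_der (f df : R -> R) N : (forall t, is_derive f t (df t)) ->
  (forall t, Rabs (df t) <= N) -> forall t s, Rabs (f t - f s) <= N * Rabs (t - s).
Proof.
  intros Hd Hb t s.
  destruct (MVT_gen f s t df) as [c [_ Hc]].
  - intros; apply Hd.
  - intros x _. apply (der_cont f x (df x)). apply Hd.
  - rewrite Hc, Rabs_mult. apply Rmult_le_compat_r. apply Rabs_pos. apply Hb.
Qed.

Lemma der_int (phi : R -> R) a : (forall s, continuous phi s) ->
  forall t, is_derive (fun t => a + RInt phi 0 t) t (phi t).
Proof.
  intros Hc t.
  assert (H1 : is_derive (RInt phi 0) t (phi t)).
  { apply (is_derive_RInt (V := R_NormedModule) phi (RInt phi 0) 0 t).
    - apply filter_forall. intro x. apply (RInt_correct (V := R_CompleteNormedModule)). apply exRI; exact Hc.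
    - apply Hc. }
  pose proof (is_derive_plus (fun _ => a) (RInt phi 0) t 0 (phi t) (is_derive_const a t) H1) as H2.
  simpl in H2. unfold plus in H2; simpl in H2. rewrite Rplus_0_l in H2. exact H2.
Qed.

Lemma geom_small (x E : R) : 0 <= E -> (forall k : nat, x <= E * (/2) ^ k) -> x <= 0.
Proof.
  intros HE H. destruct (Rle_or_lt x 0) as [|Hx]; auto. exfalso.
  pose proof (is_lim_seq_geom (/2) ltac:(rewrite Rabs_right; lra)) as Hg.
  apply is_lim_seq_Reals in Hg.
  destruct (Rle_or_lt E 0).
  - specialize (H 0%nat). simpl in H. nra.
  - destruct (Hg (x / E)) as [n Hn]. apply Rdiv_lt_0_compat; lra.
    specialize (Hn n (le_n n)). specialize (H n). unfold Rdist in Hn.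
    rewrite Rminus_0_r, Rabs_right in Hn. 2: { apply Rle_ge, pow_le. lra. }
    apply (Rmult_lt_compat_l E) in Hn; auto. unfold Rdiv in Hn.
    rewrite <- Rmult_assoc, (Rmult_comm E x), Rmult_assoc, Rinv_r, Rmult_1_r in Hn; lra.
Qed.

Lemma geom_lim (b : nat -> R) (C : R) :
  (forall k, Rabs (b (S k) - b k) <= C * (/2) ^ k) ->
  ex_finite_lim_seq b /\ forall k, Rabs (Lim_seq b - b k) <= 2 * C * (/2) ^ k.
Proof.
  intros Hb.
  assert (HC : 0 <= C). { specialize (Hb 0%nat). simpl in Hb. pose proof (Rabs_pos (b 1%nat - b 0%nat)). lra. }
  assert (Hm : forall k m, Rabs (b (m + k)%nat - b k) <= 2 * C * (/2) ^ k * (1 - (/2) ^ m)).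
  { intros k m. induction m.
    - simpl. rewrite Rminus_diag, Rabs_R0. lra.
    - replace (S m + k)%nat with (S (m + k)) by lia.
      eapply Rle_trans. 
      replace (b (S (m + k)) - b k) with ((b (S (m + k)) - b (m + k)%nat) + (b (m + k)%nat - b k)) by ring.
      apply Rabs_triang.
      specialize (Hb (m + k)%nat). rewrite pow_add in Hb. simpl. nra. }
  assert (Hm' : forall k m, (k <= m)%nat -> Rabs (b m - b k) <= 2 * C * (/2) ^ k).
  { intros k m Hkm. replace m with ((m - k) + k)%nat by lia. eapply Rle_trans. apply Hm.
    assert (0 <= (/2) ^ (m - k)) by (apply pow_le; lra).
    assert (0 <= (/2) ^ k) by (apply pow_le; lra). set (x := (/2) ^ (m - k)) in *. set (y := (/2) ^ k) in *. assert (0 <= 2 * C * y) by (apply Rmult_le_pos; lra). nra. }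
  assert (Hex : ex_finite_lim_seq b).
  { apply ex_lim_seq_cauchy_corr. intros eps.
    pose proof (is_lim_seq_geom (/2) ltac:(rewrite Rabs_right; lra)) as Hg.
    apply is_lim_seq_Reals in Hg.
    destruct (Hg (eps / (4 * C + 1))) as [N HN]. 
    { apply Rdiv_lt_0_compat. apply cond_pos. lra. }
    exists N. intros n m Hn Hmm.
    specialize (HN N (le_n N)). unfold Rdist in HN. rewrite Rminus_0_r, Rabs_right in HN by (apply Rle_ge, pow_le; lra).
    assert (H1 : Rabs (b n - b N) <= 2 * C * (/2) ^ N) by (apply Hm'; lia).
    assert (H2 : Rabs (b m - b N) <= 2 * C * (/2) ^ N) by (apply Hm'; lia).
    assert (H3 : (4 * C + 1) * (/2) ^ N < eps).
    { apply (Rmult_lt_compat_l (4 * C + 1)) in HN; [|lra]. unfold Rdiv in HN.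
      rewrite <- Rmult_assoc, (Rmult_comm (4 * C + 1) eps), Rmult_assoc, Rinv_r, Rmult_1_r in HN; lra. }
    assert (0 <= (/2) ^ N) by (apply pow_le; lra).
    replace (b n - b m) with ((b n - b N) - (b m - b N)) by ring.
    eapply Rle_lt_trans. apply Rabs_triang. rewrite Rabs_Ropp. nra. }
  split; auto.
  intros k. destruct Hex as [l Hl]. rewrite (is_lim_seq_unique b l Hl). simpl.
  assert (H1 : is_lim_seq (fun n => Rabs (b n - b k)) (Rabs (l - b k))).
  { apply (is_lim_seq_abs (fun n => b n - b k) (l - b k)). apply is_lim_seq_minus'. exact Hl. apply is_lim_seq_const. }
  pose proof (is_lim_seq_le_loc (fun n => Rabs (b n - b k)) (fun _ => 2 * C * (/2) ^ k) _ _
     (ltac:(exists k; intros n Hn; apply Hm'; lia)) H1 (is_lim_seq_const _)) as H2.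
  simpl in H2. exact H2.
Qed.

Definition nice (G : R -> R -> R) (L M : R) :=
  1 <= L /\ (forall u v t s, Rabs (G u t - G v s) <= L * (Rabs (u - v) + Rabs (t - s)))
  /\ (forall u t, Rabs (G u t) <= M).

Definition isSol (G : R -> R -> R) (c a : R) (v : R -> R) :=
  v 0 = a /\ forall t, is_derive v t (c - G (v t) t).

Lemma lip_cont (f : R -> R) N : 0 <= N -> (forall t s, Rabs (f t - f s) <= N * Rabs (t - s)) ->
  forall t, continuous f t.
Proof.
  intros HN Hf t. apply cont_eps. intro eps. apply locally_R.
  exists (eps / (N + 1)). split. apply Rdiv_lt_0_compat. apply cond_pos. lra.
  intros y Hy. eapply Rle_lt_trans. apply Hf.
  apply (Rle_lt_trans _ ((N + 1) * Rabs (y - t))). 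
  pose proof (Rabs_pos (y - t)). nra.
  apply (Rmult_lt_compat_l (N + 1)) in Hy; [|lra]. unfold Rdiv in Hy.
  rewrite <- Rmult_assoc, (Rmult_comm (N + 1) eps), Rmult_assoc, Rinv_r, Rmult_1_r in Hy; lra.
Qed.

Lemma G_cont G L M c (v : R -> R) : nice G L M -> (forall t, continuous v t) ->
  forall t, continuous (fun s => c - G (v s) s) t.
Proof.
  intros [HL [Hl _]] Hv t. apply cont_eps. intro eps.
  destruct (proj1 (cont_eps v t) (Hv t) (mkposreal (eps / (2 * L)) ltac:(apply Rdiv_lt_0_compat; [apply cond_pos|lra]))) as [d1 Hd1].
  apply locally_R. exists (Rmin d1 (eps / (2 * L))). split.
  { apply Rmin_pos. apply cond_pos. apply Rdiv_lt_0_compat. apply cond_pos. lra. }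
  intros y Hy.
  assert (Hy1 : Rabs (y - t) < d1) by (eapply Rlt_le_trans; [exact Hy|apply Rmin_l]).
  assert (Hy2 : Rabs (y - t) < eps / (2 * L)) by (eapply Rlt_le_trans; [exact Hy|apply Rmin_r]).
  specialize (Hd1 y Hy1). simpl in Hd1.
  replace (c - G (v y) y - (c - G (v t) t)) with (- (G (v y) y - G (v t) t)) by ring.
  rewrite Rabs_Ropp. eapply Rle_lt_trans. apply Hl.
  assert (E : L * (eps / (2 * L) + eps / (2 * L)) = eps) by (field; lra).
  rewrite <- E. apply Rmult_lt_compat_l. lra. lra.
Qed.

Lemma RInt_sub (f g : R -> R) a b : (forall s, continuous f s) -> (forall s, continuous g s) ->
  RInt f a b - RInt g a b = RInt (fun x => f x - g x) a b.
Proof.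
  intros Hf Hg. symmetry. apply (RInt_minus (V := R_CompleteNormedModule)); apply exRI; auto.
Qed.

Lemma exp_big L s : 1 <= L -> 1 + Rabs s <= exp (2 * L * Rabs s).
Proof.
  intros HL. eapply Rle_trans. 2: apply exp_ineq1_le. pose proof (Rabs_pos s). nra.
Qed.

Lemma half_bound K L e : 0 <= K -> 1 <= L -> 1 <= e -> K * (e - 1) / (2 * L) <= K * e / 2.
Proof.
  intros HK HL He. unfold Rdiv.
  assert (H1 : 0 < / (2 * L) <= / 2).
  { split. apply Rinv_0_lt_compat; lra. apply Rinv_le_contravar; lra. }
  assert (0 <= K * (e - 1)) by nra. assert (K * (e - 1) <= K * e) by nra.
  assert (K * (e - 1) * / (2 * L) <= K * e * / (2 * L)) by nra. nra.
Qed.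

Fixpoint pic (G : R -> R -> R) (c a : R) (k : nat) : R -> R :=
  match k with
  | O => fun _ => a
  | S k => fun t => a + RInt (fun s => c - G (pic G c a k s) s) 0 t
  end.

Lemma pic_lip G L M c a : nice G L M -> forall k t s,
  Rabs (pic G c a k t - pic G c a k s) <= (Rabs c + M) * Rabs (t - s).
Proof.
  intros Hn. pose proof Hn as [HL [Hl Hb]].
  assert (HM : 0 <= M) by (specialize (Hb 0 0); pose proof (Rabs_pos (G 0 0)); lra).
  induction k; intros t s.
  - simpl. rewrite Rminus_diag, Rabs_R0. apply Rmult_le_pos. pose proof (Rabs_pos c); lra. apply Rabs_pos.
  - apply (lip_of_der (pic G c a (S k)) (fun t => c - G (pic G c a k t) t)).
    + intro x. apply (der_int (fun s => c - G (pic G c a k s) s) a).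
      apply (G_cont G L M); auto. apply (lip_cont _ (Rabs c + M)). pose proof (Rabs_pos c); lra. exact IHk.
    + intro x. eapply Rle_trans. apply Rabs_triang. rewrite Rabs_Ropp. specialize (Hb (pic G c a k x) x). lra.
Qed.

Lemma M_nonneg G L M : nice G L M -> 0 <= M.
Proof. intros [_ [_ Hb]]. specialize (Hb 0 0). pose proof (Rabs_pos (G 0 0)). lra. Qed.

Lemma pic_cont G L M c a : nice G L M -> forall k t, continuous (pic G c a k) t.
Proof.
  intros Hn k. apply (lip_cont _ (Rabs c + M)). pose proof (Rabs_pos c); pose proof (M_nonneg _ _ _ Hn); lra.
  apply (pic_lip G L M c a Hn).
Qed.

Lemma pic_step G L M c a : nice G L M -> forall k t,
  Rabs (pic G c a (S k) t - pic G c a k t) <= (Rabs c + M) * exp (2 * L * Rabs t) * (/2) ^ k.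
Proof.
  intros Hn. pose proof Hn as [HL [Hl Hb]]. pose proof (M_nonneg _ _ _ Hn) as HM.
  set (N := Rabs c + M). assert (HN : 0 <= N) by (unfold N; pose proof (Rabs_pos c); lra).
  assert (He : forall t, 0 < exp (2 * L * Rabs t)) by (intros; apply exp_pos).
  induction k; intro t.
  - change (Rabs ((a + RInt (fun s => c - G a s) 0 t) - a) <= N * exp (2 * L * Rabs t) * (/2) ^ 0).
    unfold Rminus. rewrite Rplus_comm, <- Rplus_assoc, Rplus_opp_l, Rplus_0_l.
    eapply Rle_trans. apply (int_exp_bound _ N (2 * L) t). lra.
    apply (G_cont G L M c (fun _ => a) Hn). intros; apply continuous_const.
    intro s. eapply Rle_trans. apply Rabs_triang. rewrite Rabs_Ropp. specialize (Hb a s).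
    assert (1 <= exp (2 * L * Rabs s)) by (pose proof (exp_big L s HL); pose proof (Rabs_pos s); lra).
    fold N. unfold N in *. nra.
    specialize (He t). rewrite Rmult_1_r. eapply Rle_trans. apply half_bound; auto.
    all: try (pose proof (exp_big L t HL); pose proof (Rabs_pos t); lra). nra.
  - change (pic G c a (S (S k)) t) with (a + RInt (fun s => c - G (pic G c a (S k) s) s) 0 t).
    change (pic G c a (S k) t) with (a + RInt (fun s => c - G (pic G c a k s) s) 0 t).
    replace (a + RInt (fun s => c - G (pic G c a (S k) s) s) 0 t - (a + RInt (fun s => c - G (pic G c a k s) s) 0 t))
      with (RInt (fun s => c - G (pic G c a (S k) s) s) 0 t - RInt (fun s => c - G (pic G c a k s) s) 0 t) by ring.
    rewrite RInt_sub by (apply (G_cont G L M); auto; apply (pic_cont G L M c a Hn)).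
    eapply Rle_trans. apply (int_exp_bound _ (L * (N * (/2) ^ k)) (2 * L) t). lra.
    { intro s. apply (continuous_minus (K := R_AbsRing) (V := R_NormedModule) (fun s => c - G (pic G c a (S k) s) s) (fun s => c - G (pic G c a k s) s));
      apply (G_cont G L M); auto; apply (pic_cont G L M c a Hn). }
    intro s. replace (c - G (pic G c a (S k) s) s - (c - G (pic G c a k s) s)) with (- (G (pic G c a (S k) s) s - G (pic G c a k s) s)) by ring.
    rewrite Rabs_Ropp. eapply Rle_trans. apply Hl. rewrite Rminus_diag, Rabs_R0, Rplus_0_r.
    specialize (IHk s). fold N in IHk. replace (L * (N * (/ 2) ^ k) * exp (2 * L * Rabs s)) with (L * (N * exp (2 * L * Rabs s) * (/ 2) ^ k)) by ring.
    apply Rmult_le_compat_l. lra. exact IHk.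
    simpl. specialize (He t). assert (0 <= (/2) ^ k) by (apply pow_le; lra).
    replace (L * (N * (/ 2) ^ k) * (exp (2 * L * Rabs t) - 1) / (2 * L)) with (N * (/ 2) ^ k * (exp (2 * L * Rabs t) - 1) / 2) by (field; lra).
    assert (0 <= N * (/2) ^ k) by (apply Rmult_le_pos; lra). set (q := (/2) ^ k) in *. set (e := exp (2 * L * Rabs t)) in *. nra.
Qed.

Definition Sol (G : R -> R -> R) (c a t : R) : R := real (Lim_seq (fun k => pic G c a k t)).

Lemma Sol_approx G L M c a : nice G L M -> forall t k,
  Rabs (Sol G c a t - pic G c a k t) <= 2 * ((Rabs c + M) * exp (2 * L * Rabs t)) * (/2) ^ k.
Proof.
  intros Hn t k. unfold Sol.
  apply (geom_lim (fun k => pic G c a k t)). intro j. apply (pic_step G L M c a Hn).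
Qed.

Lemma Sol_lip G L M c a : nice G L M -> forall t s,
  Rabs (Sol G c a t - Sol G c a s) <= (Rabs c + M) * Rabs (t - s).
Proof.
  intros Hn t s.
  assert (Rabs (Sol G c a t - Sol G c a s) - (Rabs c + M) * Rabs (t - s) <= 0); [|lra].
  apply (geom_small _ (2 * ((Rabs c + M) * exp (2 * L * Rabs t)) + 2 * ((Rabs c + M) * exp (2 * L * Rabs s)))).
  { pose proof (Rabs_pos c). pose proof (M_nonneg _ _ _ Hn). pose proof (exp_pos (2 * L * Rabs t)). pose proof (exp_pos (2 * L * Rabs s)).
    assert (0 <= Rabs c + M) by lra. nra. }
  intro k. pose proof (Sol_approx G L M c a Hn t k). pose proof (Sol_approx G L M c a Hn s k).
  pose proof (pic_lip G L M c a Hn k t s).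
  replace (Sol G c a t - Sol G c a s) with ((Sol G c a t - pic G c a k t) + (pic G c a k t - pic G c a k s) - (Sol G c a s - pic G c a k s)) by ring.
  pose proof (Rabs_triang ((Sol G c a t - pic G c a k t) + (pic G c a k t - pic G c a k s)) (- (Sol G c a s - pic G c a k s))).
  pose proof (Rabs_triang (Sol G c a t - pic G c a k t) (pic G c a k t - pic G c a k s)).
  rewrite Rabs_Ropp in H2. rewrite Rmult_plus_distr_r. unfold Rminus in *. lra.
Qed.

Lemma Sol_cont G L M c a : nice G L M -> forall t, continuous (Sol G c a) t.
Proof.
  intros Hn. apply (lip_cont _ (Rabs c + M)). pose proof (Rabs_pos c); pose proof (M_nonneg _ _ _ Hn); lra.
  apply (Sol_lip G L M c a Hn).
Qed.

Lemma Sol_int G L M c a : nice G L M -> forall t,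
  Sol G c a t = a + RInt (fun s => c - G (Sol G c a s) s) 0 t.
Proof.
  intros Hn t. pose proof Hn as [HL [Hl Hb]].
  set (N := Rabs c + M). assert (HN : 0 <= N) by (unfold N; pose proof (Rabs_pos c); pose proof (M_nonneg _ _ _ Hn); lra).
  set (e := exp (2 * L * Rabs t)). assert (He : 0 < e) by apply exp_pos.
  assert (Habs : Rabs (Sol G c a t - (a + RInt (fun s => c - G (Sol G c a s) s) 0 t)) <= 0).
  { apply (geom_small _ (2 * N * e)). nra.
    intro k. pose proof (Sol_approx G L M c a Hn t (S k)) as H1. fold N e in H1.
    assert (H2 : Rabs (pic G c a (S k) t - (a + RInt (fun s => c - G (Sol G c a s) s) 0 t)) <= N * e * (/2) ^ k).
    { change (pic G c a (S k) t) with (a + RInt (fun s => c - G (pic G c a k s) s) 0 t).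
      replace (a + RInt (fun s => c - G (pic G c a k s) s) 0 t - (a + RInt (fun s => c - G (Sol G c a s) s) 0 t))
        with (RInt (fun s => c - G (pic G c a k s) s) 0 t - RInt (fun s => c - G (Sol G c a s) s) 0 t) by ring.
      rewrite RInt_sub.
      2: apply (G_cont G L M); auto; apply (pic_cont G L M c a Hn).
      2: apply (G_cont G L M); auto; apply (Sol_cont G L M c a Hn).
      eapply Rle_trans. apply (int_exp_bound _ (L * (2 * N * (/2) ^ k)) (2 * L) t). lra.
      { intro s. apply (continuous_minus (K := R_AbsRing) (V := R_NormedModule) (fun s => c - G (pic G c a k s) s) (fun s => c - G (Sol G c a s) s));
        apply (G_cont G L M); auto. apply (pic_cont G L M c a Hn). apply (Sol_cont G L M c a Hn). }
      intro s. replace (c - G (pic G c a k s) s - (c - G (Sol G c a s) s)) with (- (G (pic G c a k s) s - G (Sol G c a s) s)) by ring.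
      rewrite Rabs_Ropp. eapply Rle_trans. apply Hl. rewrite Rminus_diag, Rabs_R0, Rplus_0_r.
      pose proof (Sol_approx G L M c a Hn s k) as H3. fold N in H3. rewrite <- Rabs_Ropp in H3.
      replace (- (Sol G c a s - pic G c a k s)) with (pic G c a k s - Sol G c a s) in H3 by ring.
      replace (L * (2 * N * (/ 2) ^ k) * exp (2 * L * Rabs s)) with (L * (2 * (N * exp (2 * L * Rabs s)) * (/ 2) ^ k)) by ring.
      apply Rmult_le_compat_l. lra. exact H3.
      replace (L * (2 * N * (/ 2) ^ k) * (exp (2 * L * Rabs t) - 1) / (2 * L)) with (N * (/ 2) ^ k * (e - 1)) by (unfold e; field; lra).
      assert (0 <= N * (/2) ^ k) by (apply Rmult_le_pos; [lra|apply pow_le; lra]). nra. }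
    replace (Sol G c a t - (a + RInt (fun s => c - G (Sol G c a s) s) 0 t)) with
      ((Sol G c a t - pic G c a (S k) t) + (pic G c a (S k) t - (a + RInt (fun s => c - G (Sol G c a s) s) 0 t))) by ring.
    eapply Rle_trans. apply Rabs_triang. simpl in H1. 
    assert (0 <= (/2) ^ k) by (apply pow_le; lra). set (q := (/2) ^ k) in *. assert (Hq : 2 * (N * e) * (/ 2 * q) = N * e * q) by field. rewrite Hq in H1. change (a + RInt (fun s => c - G (pic G c a k s) s) 0 t) with (pic G c a (S k) t) in H1. assert (Hq2 : 2 * N * e * q = N * e * q + N * e * q) by ring. rewrite Hq2. lra. }
  pose proof (Rabs_pos (Sol G c a t - (a + RInt (fun s => c - G (Sol G c a s) s) 0 t))).
  assert (Rabs (Sol G c a t - (a + RInt (fun s => c - G (Sol G c a s) s) 0 t)) = 0) by lra.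
  apply Rabs_eq_0 in H0. lra.
Qed.

Lemma Sol_isSol G L M c a : nice G L M -> isSol G c a (Sol G c a).
Proof.
  intros Hn. split.
  - rewrite (Sol_int G L M c a Hn 0). rewrite RInt_point. unfold zero; simpl. ring.
  - intro t. apply (is_derive_ext (fun t => a + RInt (fun s => c - G (Sol G c a s) s) 0 t)).
    + intro x. symmetry. apply (Sol_int G L M c a Hn).
    + apply (der_int (fun s => c - G (Sol G c a s) s) a).
      apply (G_cont G L M); auto. apply (Sol_cont G L M c a Hn).
Qed.

Lemma isSol_cont G c a v : isSol G c a v -> forall t, continuous v t.
Proof.
  intros [_ Hd] t. apply continuity_pt_filterlim. apply (der_cont v t _ (Hd t)).
Qed.

Lemma isSol_int G L M c a v : nice G L M -> isSol G c a v ->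
  forall t, v t = a + RInt (fun s => c - G (v s) s) 0 t.
Proof.
  intros Hn Hs t. pose proof Hs as [H0 Hd].
  assert (Hi : is_RInt (fun s => c - G (v s) s) 0 t (minus (v t) (v 0))).
  { apply (is_RInt_derive (V := R_CompleteNormedModule) v). intros; apply Hd.
    intros; apply (G_cont G L M); auto. apply (isSol_cont G c a v Hs). }
  rewrite (is_RInt_unique _ _ _ _ Hi). unfold minus, plus, opp; simpl. rewrite H0. ring.
Qed.

Lemma isSol_lip G L M c a v : nice G L M -> isSol G c a v ->
  forall t s, Rabs (v t - v s) <= (Rabs c + M) * Rabs (t - s).
Proof.
  intros Hn [_ Hd]. pose proof Hn as [_ [_ Hb]]. apply (lip_of_der v (fun t => c - G (v t) t)); auto.
  intro x. eapply Rle_trans. apply Rabs_triang. rewrite Rabs_Ropp. specialize (Hb (v x) x). lra.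
Qed.

Lemma dep G L M c1 a1 c2 a2 v1 v2 : nice G L M -> isSol G c1 a1 v1 -> isSol G c2 a2 v2 ->
  forall t, Rabs (v1 t - v2 t) <= 2 * (Rabs (a1 - a2) + Rabs (c1 - c2)) * exp (2 * L * Rabs t).
Proof.
  intros Hn H1 H2. pose proof Hn as [HL [Hl Hb]]. pose proof (M_nonneg _ _ _ Hn) as HM.
  set (d := Rabs (a1 - a2) + Rabs (c1 - c2)).
  assert (Hd : 0 <= d) by (unfold d; pose proof (Rabs_pos (a1 - a2)); pose proof (Rabs_pos (c1 - c2)); lra).
  set (w := fun s => v1 s - v2 s).
  assert (Hwc : forall s, continuous w s).
  { intro s. apply (continuous_minus (K := R_AbsRing) (V := R_NormedModule) v1 v2).
    apply (isSol_cont G c1 a1 v1 H1). apply (isSol_cont G c2 a2 v2 H2). }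
  assert (Step : forall K, 0 <= K -> (forall s, Rabs (w s) <= K * exp (2 * L * Rabs s)) ->
     forall t, Rabs (w t) <= (d + K / 2) * exp (2 * L * Rabs t)).
  { intros K HK HwK t. unfold w. rewrite (isSol_int G L M c1 a1 v1 Hn H1 t), (isSol_int G L M c2 a2 v2 Hn H2 t).
    replace (a1 + RInt (fun s => c1 - G (v1 s) s) 0 t - (a2 + RInt (fun s => c2 - G (v2 s) s) 0 t))
      with ((a1 - a2) + (RInt (fun s => c1 - G (v1 s) s) 0 t - RInt (fun s => c2 - G (v2 s) s) 0 t)) by ring.
    rewrite RInt_sub.
    2: apply (G_cont G L M); auto; apply (isSol_cont G c1 a1 v1 H1).
    2: apply (G_cont G L M); auto; apply (isSol_cont G c2 a2 v2 H2).
    eapply Rle_trans. apply Rabs_triang.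
    pose proof (int_exp_bound (fun s => c1 - G (v1 s) s - (c2 - G (v2 s) s)) (Rabs (c1 - c2) + L * K) (2 * L) t ltac:(lra)) as HI.
    assert (HE : 1 + Rabs t <= exp (2 * L * Rabs t)) by (apply exp_big; auto).
    pose proof (Rabs_pos t).
    set (e := exp (2 * L * Rabs t)) in *.
    assert (Hr : Rabs (RInt (fun s => c1 - G (v1 s) s - (c2 - G (v2 s) s)) 0 t) <= (Rabs (c1 - c2) + L * K) * (e - 1) / (2 * L)).
    { apply HI.
      - intro s. apply (continuous_minus (K := R_AbsRing) (V := R_NormedModule) (fun s => c1 - G (v1 s) s) (fun s => c2 - G (v2 s) s));
        apply (G_cont G L M); auto. apply (isSol_cont G c1 a1 v1 H1). apply (isSol_cont G c2 a2 v2 H2).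
      - intro s. replace (c1 - G (v1 s) s - (c2 - G (v2 s) s)) with ((c1 - c2) + - (G (v1 s) s - G (v2 s) s)) by ring.
        eapply Rle_trans. apply Rabs_triang. rewrite Rabs_Ropp.
        pose proof (Hl (v1 s) (v2 s) s s) as Hls. rewrite Rminus_diag, Rabs_R0, Rplus_0_r in Hls.
        specialize (HwK s). unfold w in HwK.
        assert (HE' : 1 + Rabs s <= exp (2 * L * Rabs s)) by (apply exp_big; auto).
        pose proof (Rabs_pos s). pose proof (Rabs_pos (c1 - c2)).
        set (es := exp (2 * L * Rabs s)) in *. nra. }
    assert (Hr2 : (Rabs (c1 - c2) + L * K) * (e - 1) / (2 * L) <= (Rabs (c1 - c2) / 2 + K / 2) * e).
    { replace ((Rabs (c1 - c2) + L * K) * (e - 1) / (2 * L)) with (Rabs (c1 - c2) * (e - 1) / (2 * L) + K * (e - 1) / 2) by (field; lra).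
      pose proof (half_bound (Rabs (c1 - c2)) L e (Rabs_pos _) HL ltac:(lra)). nra. }
    unfold d. pose proof (Rabs_pos (a1 - a2)). pose proof (Rabs_pos (c1 - c2)). nra. }
  set (N1 := Rabs c1 + M). set (N2 := Rabs c2 + M).
  set (K0 := N1 + N2 + Rabs (a1 - a2)).
  assert (HK0 : 0 <= K0) by (unfold K0, N1, N2; pose proof (Rabs_pos c1); pose proof (Rabs_pos c2); pose proof (Rabs_pos (a1 - a2)); lra).
  assert (Init : forall s, Rabs (w s) <= K0 * exp (2 * L * Rabs s)).
  { intro s. unfold w.
    pose proof (isSol_lip G L M c1 a1 v1 Hn H1 s 0) as L1. pose proof (isSol_lip G L M c2 a2 v2 Hn H2 s 0) as L2.
    destruct H1 as [E1 _]. destruct H2 as [E2 _]. rewrite E1 in L1. rewrite E2 in L2. rewrite Rminus_0_r in L1, L2.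
    replace (v1 s - v2 s) with ((v1 s - a1) + (a1 - a2) - (v2 s - a2)) by ring.
    assert (HE' : 1 + Rabs s <= exp (2 * L * Rabs s)) by (apply exp_big; auto).
    pose proof (Rabs_pos s). fold N1 in L1. fold N2 in L2.
    pose proof (Rabs_triang ((v1 s - a1) + (a1 - a2)) (- (v2 s - a2))). rewrite Rabs_Ropp in H0.
    pose proof (Rabs_triang (v1 s - a1) (a1 - a2)).
    assert (0 <= N1) by (unfold N1; pose proof (Rabs_pos c1); lra).
    assert (0 <= N2) by (unfold N2; pose proof (Rabs_pos c2); lra).
    pose proof (Rabs_pos (a1 - a2)).
    unfold K0. set (es := exp (2 * L * Rabs s)) in *. unfold Rminus in *. nra. }
  assert (Iter : forall n : nat, forall s, Rabs (w s) <= (2 * d + K0 * (/2) ^ n) * exp (2 * L * Rabs s)).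
  { induction n.
    - intro s. simpl. pose proof (Init s). pose proof (exp_pos (2 * L * Rabs s)). nra.
    - intro s. eapply Rle_trans. apply (Step (2 * d + K0 * (/2) ^ n)).
      assert (0 <= (/2) ^ n) by (apply pow_le; lra). nra. exact IHn.
      simpl. right. field. }
  intro t. 
  assert (Rabs (w t) - 2 * d * exp (2 * L * Rabs t) <= 0); [|unfold w in H; lra].
  apply (geom_small _ (K0 * exp (2 * L * Rabs t))). pose proof (exp_pos (2 * L * Rabs t)). nra.
  intro k. specialize (Iter k t). pose proof (exp_pos (2 * L * Rabs t)). nra.
Qed.

Lemma cont_to_pt (f : R -> R) : (forall t, continuous f t) -> continuity f.
Proof. intros H t. apply continuity_pt_filterlim. apply H. Qed.

Lemma sol_strict G L M c1 c2 a : nice G L M -> c1 < c2 -> Sol G c1 a 1 < Sol G c2 a 1.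
Proof.
  intros Hn Hc.
  pose proof (Sol_isSol G L M c1 a Hn) as [E1 D1]. pose proof (Sol_isSol G L M c2 a Hn) as [E2 D2].
  set (u1 := Sol G c1 a) in *. set (u2 := Sol G c2 a) in *.
  assert (0 < u2 1 - u1 1); [|lra].
  apply (cross (fun t => u2 t - u1 t) (fun t => (c2 - G (u2 t) t) - (c1 - G (u1 t) t))) with (a := 0).
  - intro t. apply (is_derive_minus u2 u1). apply D2. apply D1.
  - intros t Ht. replace (u2 t) with (u1 t) by lra. lra.
  - lra.
  - rewrite E1, E2. lra.
Qed.

Lemma sol_shift G L M c a : nice G L M -> forall t,
  Rabs ((Sol G c a t - c * t) - (Sol G c a 0 - c * 0)) <= M * Rabs (t - 0).
Proof.
  intros Hn t. pose proof Hn as [_ [_ Hb]]. pose proof (Sol_isSol G L M c a Hn) as [E D].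
  apply (lip_of_der (fun t => Sol G c a t - c * t) (fun t => - G (Sol G c a t) t)).
  - intro x. pose proof (is_derive_minus (Sol G c a) (fun t => c * t) x _ _ (D x) (is_derive_scal (fun t => t) x c 1 (is_derive_id x))) as HH.
    replace (- G (Sol G c a x) x) with (minus (c - G (Sol G c a x) x) (scal c 1)). exact HH.
    unfold minus, plus, opp, scal; simpl. unfold mult; simpl. ring.
  - intro x. rewrite Rabs_Ropp. apply Hb.
Qed.

Lemma exp_mono x y : x <= y -> exp x <= exp y.
Proof. intros [H|H]. left; apply exp_increasing; auto. subst; lra. Qed.

Lemma eps_cont (f : R -> R) : (forall x eps, 0 < eps -> exists d, 0 < d /\ forall y, Rabs (y - x) < d -> Rabs (f y - f x) < eps) ->
  continuity f.
Proof.
  intros H x. apply continuity_pt_locally. intro eps. apply locally_R.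
  destruct (H x eps (cond_pos eps)) as [d [Hd Hy]]. exists d. split; auto.
Qed.

Lemma exist_per G L M th : nice G L M -> (forall u t, G u (t + 1) = G u t) ->
  exists c a, (forall t, Sol G c a (t + 1) = Sol G c a t) /\ RInt (Sol G c a) 0 1 = th.
Proof.
  intros Hn Gper. pose proof Hn as [HL [Hl Hb]]. pose proof (M_nonneg _ _ _ Hn) as HM.
  set (E := exp (2 * L)). assert (HE : 1 <= E).
  { unfold E. pose proof (exp_ineq1_le (2 * L)). lra. }
  assert (Plip : forall c a c' a', Rabs (Sol G c a 1 - Sol G c' a' 1) <= 2 * (Rabs (a - a') + Rabs (c - c')) * E).
  { intros. pose proof (dep G L M c a c' a' _ _ Hn (Sol_isSol G L M c a Hn) (Sol_isSol G L M c' a' Hn) 1).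
    rewrite Rabs_R1, Rmult_1_r in H. exact H. }
  assert (Hbd : forall c a, c - M <= Sol G c a 1 - a <= c + M).
  { intros c a. pose proof (sol_shift G L M c a Hn 1). pose proof (Sol_isSol G L M c a Hn) as [E0 _].
    rewrite E0, Rminus_0_r, Rabs_R1, Rmult_1_r, Rmult_0_r, Rminus_0_r, Rmult_1_r in H.
    apply Rabs_le_between in H. lra. }
  assert (HC : forall a, {c | Sol G c a 1 = a}).
  { intro a. destruct (IVT (fun c => Sol G c a 1 - a) (- M - 1) (M + 1)) as [c [_ Hc]].
    - apply cont_to_pt. apply (lip_cont _ (2 * E)). lra. intros t s.
      replace (Sol G t a 1 - a - (Sol G s a 1 - a)) with (Sol G t a 1 - Sol G s a 1) by ring.
      eapply Rle_trans. apply Plip. rewrite Rminus_diag, Rabs_R0, Rplus_0_l. lra.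
    - lra.
    - pose proof (Hbd (- M - 1) a). lra.
    - pose proof (Hbd (M + 1) a). lra.
    - exists c. lra. }
  set (Cf := fun a => proj1_sig (HC a)).
  assert (HCf : forall a, Sol G (Cf a) a 1 = a) by (intro a; unfold Cf; apply (proj2_sig (HC a))).
  assert (Hmono : forall c1 c2 a, c1 <= c2 -> Sol G c1 a 1 <= Sol G c2 a 1).
  { intros c1 c2 a [H|H]. left. apply (sol_strict G L M); auto. subst; lra. }
  assert (CfB : forall a, Rabs (Cf a) <= M).
  { intro a. pose proof (Hbd (Cf a) a). rewrite HCf in H. apply Rabs_le. lra. }
  assert (Cfc : forall a eps, 0 < eps -> exists d, 0 < d /\ forall a', Rabs (a' - a) < d -> Rabs (Cf a' - Cf a) < eps).
  { intros a eps Heps. set (c0 := Cf a).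
    set (pp := Sol G (c0 + eps) a 1 - a). set (pm := a - Sol G (c0 - eps) a 1).
    assert (Hpp : 0 < pp). { unfold pp. rewrite <- (HCf a) at 2. pose proof (sol_strict G L M c0 (c0 + eps) a Hn ltac:(lra)). fold c0. lra. }
    assert (Hpm : 0 < pm). { unfold pm. rewrite <- (HCf a) at 1. pose proof (sol_strict G L M (c0 - eps) c0 a Hn ltac:(lra)). fold c0. lra. }
    exists (Rmin pp pm / (2 * E + 1)). split. apply Rdiv_lt_0_compat. apply Rmin_pos; auto. lra.
    intros a' Ha'.
    assert (Hd : Rabs (a' - a) * (2 * E + 1) < Rmin pp pm).
    { apply (Rmult_lt_compat_r (2 * E + 1)) in Ha'; [|lra]. unfold Rdiv in Ha'. rewrite Rmult_assoc, Rinv_l, Rmult_1_r in Ha' by lra. exact Ha'. }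
    pose proof (Rmin_l pp pm). pose proof (Rmin_r pp pm). pose proof (Rabs_pos (a' - a)).
    assert (U1 : Sol G (c0 + eps) a' 1 > a').
    { pose proof (Plip (c0 + eps) a' (c0 + eps) a). rewrite Rminus_diag, Rabs_R0, Rplus_0_r in H2.
      apply Rabs_le_between in H2. apply Rabs_lt_between in Ha'. 
      pose proof (Rle_abs (a' - a)). unfold pp in *. nra. }
    assert (U2 : Sol G (c0 - eps) a' 1 < a').
    { pose proof (Plip (c0 - eps) a' (c0 - eps) a). rewrite Rminus_diag, Rabs_R0, Rplus_0_r in H2.
      apply Rabs_le_between in H2.
      pose proof (Rle_abs (- (a' - a))). rewrite Rabs_Ropp in H3. unfold pm in *. nra. }
    apply Rabs_lt_between. split.
    - destruct (Rlt_or_le (c0 - eps) (Cf a')) as [|Hc]. fold c0. lra.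
      exfalso. pose proof (Hmono _ _ a' Hc). rewrite HCf in H2. lra.
    - destruct (Rlt_or_le (Cf a') (c0 + eps)) as [|Hc]. fold c0. lra.
      exfalso. pose proof (Hmono _ _ a' Hc). rewrite HCf in H2. lra. }
  assert (B01 : forall a t, 0 <= t <= 1 -> Rabs (Sol G (Cf a) a t - a) <= 2 * M).
  { intros a t Ht. pose proof (isSol_lip G L M (Cf a) a _ Hn (Sol_isSol G L M (Cf a) a Hn) t 0) as H.
    pose proof (Sol_isSol G L M (Cf a) a Hn) as [E0 _]. rewrite E0, Rminus_0_r in H.
    rewrite (Rabs_right t) in H by lra. pose proof (CfB a). nra. }
  set (mean := fun a => RInt (Sol G (Cf a) a) 0 1).
  assert (Hma : forall a, Rabs (mean a - a) <= 2 * M).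
  { intro a. unfold mean.
    assert (Ec : RInt (fun _ => a) 0 1 = a).
    { rewrite RInt_const. unfold scal; simpl. unfold mult; simpl. ring. }
    replace (RInt (Sol G (Cf a) a) 0 1 - a) with (RInt (Sol G (Cf a) a) 0 1 - RInt (fun _ => a) 0 1) by (rewrite Ec; ring).
    rewrite RInt_sub. 2: apply (Sol_cont G L M _ _ Hn). 2: intros; apply continuous_const.
    replace (2 * M) with ((1 - 0) * (2 * M)) by ring.
    apply abs_RInt_le_const. lra. apply exRI. intro s.
    apply (continuous_minus (K := R_AbsRing) (V := R_NormedModule) (Sol G (Cf a) a) (fun _ => a)).
    apply (Sol_cont G L M _ _ Hn). apply continuous_const.
    intros t Ht. apply B01; auto. }
  assert (Hmd : forall a a', Rabs (mean a' - mean a) <= 2 * (Rabs (a' - a) + Rabs (Cf a' - Cf a)) * E).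
  { intros a a'. unfold mean. rewrite RInt_sub. 2, 3: apply (Sol_cont G L M _ _ Hn).
    replace (2 * (Rabs (a' - a) + Rabs (Cf a' - Cf a)) * E) with ((1 - 0) * (2 * (Rabs (a' - a) + Rabs (Cf a' - Cf a)) * E)) by ring.
    apply abs_RInt_le_const. lra. apply exRI. intro s.
    apply (continuous_minus (K := R_AbsRing) (V := R_NormedModule) (Sol G (Cf a') a') (Sol G (Cf a) a)); apply (Sol_cont G L M _ _ Hn).
    intros t Ht. eapply Rle_trans. apply (dep G L M _ _ _ _ _ _ Hn (Sol_isSol G L M _ _ Hn) (Sol_isSol G L M _ _ Hn) t).
    apply Rmult_le_compat_l. pose proof (Rabs_pos (a' - a)). pose proof (Rabs_pos (Cf a' - Cf a)). lra.
    unfold E. apply exp_mono. rewrite Rabs_right by lra. nra. }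
  assert (Hmc : continuity (fun a => mean a - th)).
  { apply eps_cont. intros a eps Heps.
    set (eta := eps / (4 * E)). assert (Heta : 0 < eta) by (unfold eta; apply Rdiv_lt_0_compat; lra).
    destruct (Cfc a eta Heta) as [d1 [Hd1 Hc1]].
    exists (Rmin d1 eta). split. apply Rmin_pos; auto.
    intros a' Ha'. replace (mean a' - th - (mean a - th)) with (mean a' - mean a) by ring.
    eapply Rle_lt_trans. apply Hmd.
    assert (H1 : Rabs (a' - a) < eta) by (eapply Rlt_le_trans; [exact Ha'|apply Rmin_r]).
    assert (H2 : Rabs (Cf a' - Cf a) < eta) by (apply Hc1; eapply Rlt_le_trans; [exact Ha'|apply Rmin_l]).
    assert (E4 : 2 * (eta + eta) * E = eps) by (unfold eta; field; lra).
    rewrite <- E4. apply Rmult_lt_compat_r. lra. lra. }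
  destruct (IVT (fun a => mean a - th) (th - 2 * M - 1) (th + 2 * M + 1) Hmc) as [a0 [_ Ha0]].
  - lra.
  - pose proof (Hma (th - 2 * M - 1)). apply Rabs_le_between in H. lra.
  - pose proof (Hma (th + 2 * M + 1)). apply Rabs_le_between in H. lra.
  - exists (Cf a0), a0. split.
    + set (c := Cf a0). set (u := Sol G c a0).
      assert (Hv : isSol G c a0 (fun t => u (t + 1))).
      { pose proof (Sol_isSol G L M c a0 Hn) as [E0 D0]. split.
        - rewrite Rplus_0_l. apply HCf.
        - intro t. pose proof (is_derive_comp u (fun t => t + 1) t _ 1 (D0 (t + 1))) as HH.
          assert (HD1 : is_derive (fun t => t + 1) t 1).
          { pose proof (is_derive_plus (fun t => t) (fun _ => 1) t 1 0 (is_derive_id t) (is_derive_const 1 t)) as H3.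
            unfold plus in H3; simpl in H3. rewrite Rplus_0_r in H3. exact H3. }
          specialize (HH HD1). unfold scal in HH; simpl in HH; unfold mult in HH; simpl in HH.
          rewrite Rmult_1_l, Gper in HH. exact HH. }
      intro t. pose proof (dep G L M c a0 c a0 _ _ Hn Hv (Sol_isSol G L M c a0 Hn) t) as Hd.
      rewrite !Rminus_diag, Rabs_R0, Rplus_0_r, Rmult_0_r, Rmult_0_l in Hd.
      pose proof (Rabs_pos (u (t + 1) - u t)). assert (Rabs (u (t + 1) - u t) = 0) by (fold u in Hd; lra).
      apply Rabs_eq_0 in H0. unfold u in H0. unfold u. lra.
    + unfold mean in Ha0. lra.
Qed.

Lemma lub_fin (E : R -> Prop) x0 B : E x0 -> (forall y, E y -> y <= B) ->
  (forall y, E y -> y <= real (Lub_Rbar E)) /\ (forall z, (forall y, E y -> y <= z) -> real (Lub_Rbar E) <= z).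
Proof.
  intros H0 HB. destruct (Lub_Rbar_correct E) as [Hub Hl].
  destruct (Lub_Rbar E) as [l| |] eqn:Hq.
  - simpl. split. intros y Hy. apply (Hub y Hy). intros z Hz. apply (Hl (Finite z)). intros y Hy. apply Hz, Hy.
  - exfalso. specialize (Hl (Finite B)). simpl in Hl. apply Hl. intros y Hy. apply HB, Hy.
  - exfalso. specialize (Hub x0 H0). simpl in Hub. exact Hub.
Qed.

Lemma glb_fin (E : R -> Prop) x0 B : E x0 -> (forall y, E y -> B <= y) ->
  (forall y, E y -> real (Glb_Rbar E) <= y) /\ (forall z, (forall y, E y -> z <= y) -> z <= real (Glb_Rbar E)).
Proof.
  intros H0 HB. destruct (Glb_Rbar_correct E) as [Hlb Hl].
  destruct (Glb_Rbar E) as [l| |] eqn:Hq.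
  - simpl. split. intros y Hy. apply (Hlb y Hy). intros z Hz. apply (Hl (Finite z)). intros y Hy. apply Hz, Hy.
  - exfalso. specialize (Hlb x0 H0). simpl in Hlb. exact Hlb.
  - exfalso. specialize (Hl (Finite B)). simpl in Hl. apply Hl. intros y Hy. apply HB, Hy.
Qed.

Lemma per_red (f : R -> R) : (forall x, f (x + 1) = f x) ->
  forall x, exists y, 0 <= y <= 1 /\ f x = f y.
Proof.
  intros Hp.
  assert (Hn : forall n : nat, forall x, - INR n <= x <= INR n + 1 -> exists y, 0 <= y <= 1 /\ f x = f y).
  { induction n; intros x Hx.
    - simpl in Hx. exists x. split. lra. reflexivity.
    - rewrite S_INR in Hx. pose proof (pos_INR n).
      destruct (Rlt_or_le 1 x) as [H1|H1].
      + destruct (IHn (x - 1)) as [y [Hy Hf]]. lra. exists y. split; auto.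
        rewrite <- Hf, <- (Hp (x - 1)). f_equal. ring.
      + destruct (Rle_or_lt 0 x) as [H2|H2].
        * exists x. split. lra. reflexivity.
        * destruct (IHn (x + 1)) as [y [Hy Hf]]. lra. exists y. split; auto. rewrite <- Hf, Hp. reflexivity. }
  intro x. destruct (nfloor_ex (Rabs x) (Rabs_pos x)) as [n Hn'].
  pose proof (Rle_abs x). pose proof (Rle_abs (- x)). rewrite Rabs_Ropp in H0. apply (Hn (S n)). rewrite S_INR. lra.
Qed.

Lemma Derive_per (F : R -> R) : periodic1 F -> (forall x, ex_derive F x) ->
  forall x, Derive F (x + 1) = Derive F x.
Proof.
  intros Hp Hd x. symmetry. apply is_derive_unique.
  assert (HD1 : is_derive (fun t => t + 1) x 1).
  { pose proof (is_derive_plus (fun t => t) (fun _ => 1) x 1 0 (is_derive_id x) (is_derive_const 1 x)) as H3.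
    unfold plus in H3; simpl in H3. rewrite Rplus_0_r in H3. exact H3. }
  pose proof (is_derive_comp F (fun t => t + 1) x _ 1 (Derive_correct F (x + 1) (Hd (x + 1))) HD1) as HH.
  unfold scal in HH; simpl in HH; unfold mult in HH; simpl in HH. rewrite Rmult_1_l in HH.
  apply (is_derive_ext (fun t => F (t + 1))). intro t. apply Hp. exact HH.
Qed.

Lemma rolle01 (F dF : R -> R) : (forall x, is_derive F x (dF x)) -> F 1 = F 0 ->
  exists a, 0 <= a <= 1 /\ dF a = 0.
Proof.
  intros Hd Hp. destruct (MVT_gen F 0 1 dF) as [a [Ha Hf]].
  - intros; apply Hd.
  - intros x _. apply (der_cont F x (dF x)). apply Hd.
  - exists a. rewrite Rmin_left, Rmax_right in Ha by lra. split; auto. rewrite Hp in Hf. lra.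
Qed.

Lemma cell_unique H th c1 c2 F1 F2 : cell_solution H th c1 F1 -> cell_solution H th c2 F2 -> c2 < c1 -> False.
Proof.
  intros [P1 [[D1 [DD1 _]] E1]] [P2 [[D2 [DD2 _]] E2]] Hc.
  set (w := fun t => Derive F1 t - Derive F2 t).
  assert (Hw : forall t, is_derive w t (Derive (Derive F1) t - Derive (Derive F2) t)).
  { intro t. apply (is_derive_minus (Derive F1) (Derive F2)); apply Derive_correct; auto. }
  destruct (rolle01 (fun t => F1 t - F2 t) w) as [a0 [Ha0 Hw0]].
  { intro t. apply (is_derive_minus F1 F2); apply Derive_correct; auto. }
  { specialize (P1 0). specialize (P2 0). rewrite Rplus_0_l in P1, P2. rewrite P1, P2. reflexivity. }
  assert (0 < w (a0 + 1)).
  { apply (cross w _ Hw) with (a := a0).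
    - intros t Ht. unfold w in Ht. specialize (E1 t). specialize (E2 t).
      replace (Derive F1 t) with (Derive F2 t) in E1 by lra. lra.
    - lra.
    - lra. }
  unfold w in H0. rewrite (Derive_per F1 P1 D1), (Derive_per F2 P2 D2) in H0. unfold w in Hw0. lra.
Qed.

Definition clamp (K u : R) := Rmax (- K) (Rmin K u).

Lemma clamp_abs K u : 0 <= K -> Rabs (clamp K u) <= K.
Proof. intros HK. unfold clamp, Rmax, Rmin. repeat destruct Rle_dec; apply Rabs_le; lra. Qed.

Lemma clamp_lip K u v : 0 <= K -> Rabs (clamp K u - clamp K v) <= Rabs (u - v).
Proof.
  intros HK. pose proof (Rle_abs (u - v)) as H1. pose proof (Rle_abs (- (u - v))) as H2. rewrite Rabs_Ropp in H2.
  unfold clamp, Rmax, Rmin. repeat destruct Rle_dec; apply Rabs_le; lra.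
Qed.

Lemma clamp_id K u : Rabs u <= K -> clamp K u = u.
Proof. intros H. apply Rabs_le_between in H. unfold clamp, Rmax, Rmin. repeat destruct Rle_dec; lra. Qed.

Lemma clamp_hi K u : 0 <= K -> K <= u -> clamp K u = K.
Proof. intros. unfold clamp, Rmax, Rmin. repeat destruct Rle_dec; lra. Qed.

Lemma clamp_lo K u : 0 <= K -> u <= - K -> clamp K u = - K.
Proof. intros. unfold clamp, Rmax, Rmin. repeat destruct Rle_dec; lra. Qed.

Theorem propositionC2 (H : R -> R -> R)
  (Hcont : forall z : R * R, continuous (fun w : R * R => H (fst w) (snd w)) z)
  (Hcoer : forall M : R, exists B : R, forall p x : R, B <= Rabs p -> M <= H p x)
  (Hper : forall p x : R, H p (x + 1) = H p x)
  (Hlip : forall B : R, 0 < B -> exists L : R, forall p q x y : R,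
      Rabs p <= B -> Rabs q <= B ->
      Rabs (H p x - H q y) <= L * (Rabs (p - q) + Rabs (x - y))) :
  forall theta : R, exists Hbar : R,
    (exists F : R -> R, cell_solution H theta Hbar F /\
       forall x, pminus H theta <= theta + Derive F x <= pplus H theta) /\
    (forall c : R, (exists G : R -> R, cell_solution H theta c G) -> c = Hbar).
Proof.
  intro theta.
  destruct (Hlip (Rabs theta + 1)) as [L1 HL1]. pose proof (Rabs_pos theta); lra.
  set (SU := fun y => exists x, 0 <= x <= 1 /\ y = H theta x).
  assert (SUb : forall y, SU y -> y <= H theta 0 + Rabs L1).
  { intros y [x [Hx Hy]]. subst y. specialize (HL1 theta theta x 0 ltac:(lra) ltac:(lra)).
    rewrite Rminus_diag, Rabs_R0, Rplus_0_l, Rminus_0_r in HL1.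
    apply Rabs_le_between in HL1. pose proof (Rle_abs (L1 * Rabs x)) as Hq. rewrite Rabs_mult, Rabs_Rabsolu in Hq.
    assert (Rabs x <= 1) by (apply Rabs_le; lra). pose proof (Rabs_pos L1). pose proof (Rabs_pos x). nra. }
  assert (SU0 : SU (H theta 0)). { exists 0. split. lra. reflexivity. }
  destruct (lub_fin SU (H theta 0) _ SU0 SUb) as [U1 _].
  set (U := Ubar H theta). change (Ubar H theta) with (real (Lub_Rbar SU)) in U.
  assert (HU : forall x, H theta x <= U).
  { intro x. destruct (per_red (fun x => H theta x) (Hper theta) x) as [y [Hy E]]. simpl in E. rewrite E.
    apply U1. exists y. split; auto. }
  destruct (Hcoer (U + 1)) as [B HB].
  set (K := Rmax B (Rabs theta + 1)).
  assert (HKB : B <= K) by apply Rmax_l.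
  assert (HKt : Rabs theta + 1 <= K) by apply Rmax_r.
  assert (HK0 : 0 < K) by (pose proof (Rabs_pos theta); lra).
  destruct (Hlip K HK0) as [L HL].
  set (L' := Rmax L 1). assert (HLL : L <= L') by apply Rmax_l. assert (HL1' : 1 <= L') by apply Rmax_r.
  set (M' := Rabs (H 0 0) + L' * (K + 1)).
  set (G := fun u t => H (clamp K u) t).
  assert (Hn : nice G L' M').
  { split; [exact HL1'|split].
    - intros u v t s. unfold G. eapply Rle_trans. apply HL; apply clamp_abs; lra.
      pose proof (clamp_lip K u v ltac:(lra)). pose proof (Rabs_pos (clamp K u - clamp K v)). pose proof (Rabs_pos (t - s)).
      apply (Rle_trans _ (L' * (Rabs (clamp K u - clamp K v) + Rabs (t - s)))). nra. nra.
    - intros u t. unfold G. destruct (per_red (fun t => H (clamp K u) t) (Hper _) t) as [y [Hy E]]. simpl in E. rewrite E.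
      specialize (HL (clamp K u) 0 y 0 (clamp_abs K u ltac:(lra)) ltac:(rewrite Rabs_R0; lra)).
      rewrite !Rminus_0_r in HL. pose proof (clamp_abs K u ltac:(lra)).
      assert (Rabs y <= 1) by (apply Rabs_le; lra).
      pose proof (Rabs_pos (clamp K u)). pose proof (Rabs_pos y).
      assert (Rabs (H (clamp K u) y - H 0 0) <= L' * (K + 1)).
      { eapply Rle_trans. exact HL. apply (Rle_trans _ (L' * (Rabs (clamp K u) + Rabs y))). nra. nra. }
      pose proof (Rabs_triang (H (clamp K u) y - H 0 0) (H 0 0)). replace (H (clamp K u) y - H 0 0 + H 0 0) with (H (clamp K u) y) in H5 by ring.
      unfold M'. lra. }
  assert (Gper : forall u t, G u (t + 1) = G u t) by (intros; unfold G; apply Hper).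
  destruct (exist_per G L' M' theta Hn Gper) as [c [a [Hpu Hmean]]].
  set (u := Sol G c a) in *.
  pose proof (Sol_isSol G L' M' c a Hn) as [Hu0 Hud]. fold u in Hu0, Hud.
  pose proof (Sol_cont G L' M' c a Hn) as Huc. fold u in Huc.
  assert (Hphic : forall s, continuous (fun s => u s - theta) s).
  { intro s. apply (continuous_minus (K := R_AbsRing) (V := R_NormedModule) u (fun _ => theta)). apply Huc. apply continuous_const. }
  set (F := fun t => RInt (fun s => u s - theta) 0 t).
  assert (DF : forall t, is_derive F t (u t - theta)).
  { intro t. apply (is_derive_ext (fun t => 0 + RInt (fun s => u s - theta) 0 t)). intro; unfold F; apply Rplus_0_l.
    apply (der_int (fun s => u s - theta) 0 Hphic). }
  assert (DFe : forall t, Derive F t = u t - theta) by (intro; apply is_derive_unique, DF).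
  assert (Dm : forall t, is_derive (fun t => u t - theta) t (c - G (u t) t)).
  { intro t. pose proof (is_derive_minus u (fun _ => theta) t _ _ (Hud t) (is_derive_const theta t)) as HH.
    unfold minus, plus, opp, zero in HH; simpl in HH. replace (c - G (u t) t) with (c - G (u t) t + - 0) by ring. exact HH. }
  assert (DDF : forall t, is_derive (Derive F) t (c - G (u t) t)).
  { intro t. apply (is_derive_ext (fun t => u t - theta)). intro; symmetry; apply DFe. apply Dm. }
  assert (DDFe : forall t, Derive (Derive F) t = c - G (u t) t) by (intro; apply is_derive_unique, DDF).
  assert (F0 : F 0 = 0) by (unfold F; rewrite RInt_point; reflexivity).
  assert (F1 : F 1 = 0).
  { unfold F. rewrite <- RInt_sub. rewrite Hmean, RInt_const. unfold scal; simpl; unfold mult; simpl. ring.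
    exact Huc. intros; apply continuous_const. }
  assert (Fper : periodic1 F).
  { intro x. 
    assert (HD1 : forall t, is_derive (fun t => t + 1) t 1).
    { intro t. pose proof (is_derive_plus (fun t => t) (fun _ => 1) t 1 0 (is_derive_id t) (is_derive_const 1 t)) as H3.
      unfold plus in H3; simpl in H3. rewrite Rplus_0_r in H3. exact H3. }
    assert (Hd : forall t, is_derive (fun t => F (t + 1) - F t) t 0).
    { intro t. pose proof (is_derive_comp F (fun t => t + 1) t _ 1 (DF (t + 1)) (HD1 t)) as HH.
      unfold scal in HH; simpl in HH; unfold mult in HH; simpl in HH. rewrite Rmult_1_l in HH.
      pose proof (is_derive_minus _ _ t _ _ HH (DF t)) as HH2. rewrite Hpu in HH2.
      unfold minus, plus, opp in HH2; simpl in HH2. replace 0 with (u t - theta + - (u t - theta)) by ring. exact HH2. }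
    pose proof (lip_of_der (fun t => F (t + 1) - F t) (fun _ => 0) 0 Hd ltac:(intros; cbv beta; rewrite Rabs_R0; lra) x 0) as Hq.
    rewrite Rmult_0_l, Rplus_0_l, F1, F0 in Hq. pose proof (Rabs_pos (F (x + 1) - F x - (0 - 0))). 
    assert (Rabs (F (x + 1) - F x - (0 - 0)) = 0) by lra. apply Rabs_eq_0 in H1. lra. }
  destruct (rolle01 F (fun t => u t - theta) DF ltac:(rewrite F0, F1; reflexivity)) as [a0 [Ha0 Hua0]].
  assert (ured : forall x, exists y, 0 <= y <= 1 /\ u x = u y) by (apply per_red; exact Hpu).
  assert (Hclθ : clamp K theta = theta) by (apply clamp_id; lra).
  assert (HcU : c <= U).
  { destruct (Rle_or_lt c U) as [|Hlt]; auto. exfalso.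
    assert (Hx : 0 < u (a0 + 1) - theta).
    { apply (cross (fun t => u t - theta) (fun t => c - G (u t) t) Dm) with (a := a0).
      - intros t Ht. replace (u t) with theta by lra. unfold G. rewrite Hclθ. pose proof (HU t). lra.
      - lra.
      - lra. }
    rewrite Hpu in Hx. lra. }
  set (S := fun p => exists x, 0 <= x <= 1 /\ H p x <= U).
  assert (Sbd : forall p, S p -> Rabs p < K).
  { intros p [x [Hx Hp]]. destruct (Rlt_or_le (Rabs p) K) as [|Hk]; auto. exfalso.
    pose proof (HB p x ltac:(lra)). lra. }
  assert (Sth : S theta) by (exists 0; split; [lra|apply HU]).
  destruct (lub_fin S theta K Sth ltac:(intros y Hy; pose proof (Sbd y Hy) as Hs; apply Rabs_lt_between in Hs; lra)) as [P1 P2].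
  destruct (glb_fin S theta (- K) Sth ltac:(intros y Hy; pose proof (Sbd y Hy) as Hs; apply Rabs_lt_between in Hs; lra)) as [Q1 Q2].
  change (pplus H theta) with (real (Lub_Rbar S)). change (pminus H theta) with (real (Glb_Rbar S)).
  set (pp := real (Lub_Rbar S)) in *. set (pm := real (Glb_Rbar S)) in *.
  assert (Hpp1 : theta <= pp) by (apply P1; exact Sth).
  assert (Hpm1 : pm <= theta) by (apply Q1; exact Sth).
  assert (Hpp2 : pp <= K) by (apply P2; intros y Hy; pose proof (Sbd y Hy) as Hs; apply Rabs_lt_between in Hs; lra).
  assert (Hpm2 : - K <= pm) by (apply Q2; intros y Hy; pose proof (Sbd y Hy) as Hs; apply Rabs_lt_between in Hs; lra).
  assert (Gbig : forall p z, (pp < p \/ p < pm) -> U < G p z).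
  { intros p z Hp. unfold G.
    destruct (Rle_or_lt K p) as [Hk|Hk].
    { rewrite clamp_hi by lra. pose proof (HB K z ltac:(rewrite Rabs_right; lra)). lra. }
    destruct (Rle_or_lt p (- K)) as [Hk'|Hk'].
    { rewrite clamp_lo by lra. pose proof (HB (- K) z ltac:(rewrite Rabs_Ropp, Rabs_right; lra)). lra. }
    rewrite clamp_id by (apply Rabs_le; lra).
    destruct (Rlt_or_le U (H p z)) as [|Hle]; auto. exfalso.
    destruct (per_red (fun t => H p t) (Hper p) z) as [y [Hy E]]. simpl in E.
    assert (Sp : S p) by (exists y; split; auto; rewrite <- E; exact Hle).
    pose proof (P1 p Sp). pose proof (Q1 p Sp). lra. }
  assert (Hup : forall x, u x <= pp).
  { intro x. destruct (Rle_or_lt (u x) pp) as [|Hlt]; auto. exfalso.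
    set (p := (u x + pp) / 2).
    assert (Hw : forall t, is_derive (fun t => p - u t) t (- (c - G (u t) t))).
    { intro t. pose proof (is_derive_minus (fun _ => p) u t _ _ (is_derive_const p t) (Hud t)) as HH.
      unfold minus, plus, opp, zero in HH; simpl in HH. replace (- (c - G (u t) t)) with (0 + - (c - G (u t) t)) by ring. exact HH. }
    destruct (ured x) as [y [Hy Exy]].
    assert (Hx : 0 < p - u (y + 1 + 1)).
    { apply (cross (fun t => p - u t) _ Hw) with (a := a0).
      - intros t Ht. replace (u t) with p by lra. pose proof (Gbig p t ltac:(left; unfold p; lra)). lra.
      - lra.
      - unfold p. lra. }
    rewrite !Hpu in Hx. rewrite <- Exy in Hx. unfold p in Hx. lra. }
  assert (Hlo : forall x, pm <= u x).
  { intro x. destruct (Rle_or_lt pm (u x)) as [|Hlt]; auto. exfalso.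
    set (p := (u x + pm) / 2).
    assert (Hw : forall t, is_derive (fun t => u (- t) - p) t (- (c - G (u (- t)) (- t)))).
    { intro t. 
      assert (Ho : is_derive (fun t => - t) t (-1)).
      { pose proof (is_derive_opp (fun t => t) t 1 (is_derive_id t)) as H3. unfold opp in H3; simpl in H3. exact H3. }
      pose proof (is_derive_comp u (fun t => - t) t _ _ (Hud (- t)) Ho) as HH.
      pose proof (is_derive_minus _ (fun _ => p) t _ _ HH (is_derive_const p t)) as HH2.
      unfold minus, plus, opp, zero, scal in HH2; simpl in HH2. unfold mult in HH2; simpl in HH2.
      replace (- (c - G (u (- t)) (- t))) with (-1 * (c - G (u (- t)) (- t)) + - 0) by ring. exact HH2. }
    destruct (ured x) as [y [Hy Exy]].
    assert (Hx : 0 < u (- (2 - y)) - p).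
    { apply (cross (fun t => u (- t) - p) _ Hw) with (a := - a0).
      - intros t Ht. assert (Hq : u (- t) = p) by lra. rewrite Hq. pose proof (Gbig p (- t) ltac:(right; unfold p; lra)). lra.
      - lra.
      - rewrite Ropp_involutive. unfold p. lra. }
    replace (- (2 - y)) with (y - 1 - 1) in Hx by ring.
    assert (E1 : u (y - 1 - 1) = u y).
    { rewrite <- (Hpu (y - 1 - 1)). replace (y - 1 - 1 + 1) with (y - 1) by ring.
      rewrite <- (Hpu (y - 1)). f_equal. ring. }
    rewrite E1, <- Exy in Hx. unfold p in Hx. lra. }
  assert (Hcl : forall x, clamp K (u x) = u x).
  { intro x. apply clamp_id. pose proof (Hup x). pose proof (Hlo x). apply Rabs_le. lra. }
  assert (Hcell : cell_solution H theta c F).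
  { split; [exact Fper|split].
    - split; [|split].
      + intro x. exists (u x - theta). apply DF.
      + intro x. exists (c - G (u x) x). apply DDF.
      + intro x. apply (continuous_ext (fun t => c - G (u t) t)). intro; symmetry; apply DDFe.
        apply (G_cont G L' M' c u Hn Huc).
    - intro x. rewrite DDFe, DFe. replace (theta + (u x - theta)) with (u x) by ring.
      unfold G. rewrite Hcl. ring. }
  exists c. split.
  - exists F. split; auto. intro x. rewrite DFe. replace (theta + (u x - theta)) with (u x) by ring.
    split; [apply Hlo|apply Hup].
  - intros c' [G' HG']. destruct (Rtotal_order c' c) as [Hlt|[Heq|Hgt]]; auto.
    + exfalso. apply (cell_unique H theta c c' F G' Hcell HG' Hlt).
    + exfalso. apply (cell_unique H theta c' c G' F HG' Hcell Hgt).
Qed.
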